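(* Let $0<a<m$ and consider, on the region $a<\rho<\sqrt{4m^2+a^2}$ of the plane (polar coordinates $(\rho,\varphi)$), the functions $$r=\sqrt{\rho^2-a^2},\qquad K=\frac{2m}{r},\qquad b_\rho=\frac{r}{\rho},\qquad b_\varphi=\frac{a}{\rho},$$ so that $b_\rho^2+b_\varphi^2=1$ and $K>1$ on this region (the ergoregion). The radial parts of the two families of zero-energy null geodesics (parametrized by $t$) are $$\frac{d\rho^+}{dt}=\frac{(Kb_\rho^2-1)\sqrt{K-1}}{-Kb_\rho\sqrt{K-1}-Kb_\varphi},\qquad \frac{d\rho^-}{dt}=\frac{-(Kb_\rho^2-1)\sqrt{K-1}}{Kb_\rho\sqrt{K-1}-Kb_\varphi}=-\frac{\sqrt{K-1}\,\bigl(Kb_\rho\sqrt{K-1}+Kb_\varphi\bigr)}{K^2},$$ (the second expression for $d\rho^-/dt$ being its continuous extension). Then: (i) the denominator of $d\rho^+/dt$ never vanishes on the region, and $d\rho^+/dt=0$ exactly on the two circles where $r=r_\pm:=m\pm\sqrt{m^2-a^2}$ (equivalently $Kb_\rho^2=1$); these two circles are invariant under the $(+)$ flow, i.e. the $(+)$ family produces two horizons; (ii) $d\rho^-/dt<0$ everywhere on the region, so $\rho^-(t)$ is strictly decreasing along every $(-)$ trajectory and the $(-)$ family produces no horizon.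
   Context: This is the $2+1$ reduction of the Kerr metric (Kerr–Schild form) to the equatorial plane $z=0$, $\xi_z=0$, with Hamiltonian $H=\tau^2-\xi_\rho^2-(\xi_\varphi/\rho)^2+K(-\tau+b_\rho\xi_\rho+b_\varphi\xi_\varphi/\rho)^2$. Zero-energy null geodesics are the null bicharacteristics of $H$ with $\tau=0$, reparametrized by the time $t$; on the characteristic set one has $\xi_\rho=\frac{-Kb_\rho b_\varphi\pm\sqrt{K-1}}{Kb_\rho^2-1}\,\xi_\varphi/\rho$, and the sign $\pm$ defines the $(\pm)$ family. A horizon produced by a family is a circle $\{\rho=\text{const}\}$ in the ergoregion that is a closed trajectory (limit cycle) of that family. *)

(* Defs.v *)
From Stdlib Require Import Reals Lra.
Open Scope R_scope.

(* Equatorial Kerr quantities, as functions of the polar radius rho,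
   with parameters m (mass) and a (rotation). *)
Definition rr (a rho : R) : R := sqrt (rho ^ 2 - a ^ 2).
Definition KK (m a rho : R) : R := 2 * m / rr a rho.
Definition b_rho (a rho : R) : R := rr a rho / rho.
Definition b_phi (a rho : R) : R := a / rho.

Definition in_region (m a rho : R) : Prop :=
  a < rho < sqrt (4 * m ^ 2 + a ^ 2).

Definition den_plus (m a rho : R) : R :=
  - KK m a rho * b_rho a rho * sqrt (KK m a rho - 1) - KK m a rho * b_phi a rho.

Definition drho_plus (m a rho : R) : R :=
  (KK m a rho * b_rho a rho ^ 2 - 1) * sqrt (KK m a rho - 1) / den_plus m a rho.

Definition den_minus (m a rho : R) : R :=
  KK m a rho * b_rho a rho * sqrt (KK m a rho - 1) - KK m a rho * b_phi a rho.

Definition drho_minus_raw (m a rho : R) : R :=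
  - (KK m a rho * b_rho a rho ^ 2 - 1) * sqrt (KK m a rho - 1) / den_minus m a rho.

(* Its continuous extension, used as the definition of d rho^- / dt. *)
Definition drho_minus (m a rho : R) : R :=
  - (sqrt (KK m a rho - 1)
       * (KK m a rho * b_rho a rho * sqrt (KK m a rho - 1) + KK m a rho * b_phi a rho))
    / KK m a rho ^ 2.

Definition r_plus (m a : R) : R := m + sqrt (m ^ 2 - a ^ 2).
Definition r_minus (m a : R) : R := m - sqrt (m ^ 2 - a ^ 2).

Definition radial_solution (m a : R) (f : R -> R) (t0 t1 : R) (x : R -> R) : Prop :=
  forall t, t0 < t < t1 -> in_region m a (x t) /\ derivable_pt_lim x t (f (x t)).

(* Main.v *)
Require Import Defs.
From Stdlib Require Import Reals.
From Stdlib Require Import Lra Psatz.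
From Coquelicot Require Import Coquelicot.
Open Scope R_scope.

Lemma region_facts m a rho : 0 < a -> 0 < m -> in_region m a rho ->
  0 < rho /\ 0 < rr a rho /\ rr a rho * rr a rho = rho ^ 2 - a ^ 2 /\ rr a rho < 2 * m.
Proof.
  intros Ha Hm [H1 H2].
  assert (Hr : 0 < rho) by lra.
  assert (Hp : 0 < rho ^ 2 - a ^ 2) by nra.
  assert (Hs : rr a rho * rr a rho = rho ^ 2 - a ^ 2) by (unfold rr; apply sqrt_sqrt; lra).
  assert (Hpos : 0 < rr a rho) by (unfold rr; apply sqrt_lt_R0; lra).
  assert (HX : 0 <= 4 * m ^ 2 + a ^ 2) by nra.
  assert (HS := sqrt_sqrt _ HX).
  assert (HS0 := sqrt_pos (4 * m ^ 2 + a ^ 2)).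
  assert (rho ^ 2 < 4 * m ^ 2 + a ^ 2) by nra.
  repeat split; try lra. nra.
Qed.

Section S.
Variables m a rho : R.
Hypothesis Ha : 0 < a.
Hypothesis Ham : a < m.
Hypothesis Hreg : in_region m a rho.

Let F := region_facts m a rho Ha ltac:(lra) Hreg.

Lemma K_gt1 : 1 < KK m a rho.
Proof.
  destruct F as (h1 & h2 & h3 & h4). unfold KK.
  apply (Rmult_lt_reg_r (rr a rho)); auto. field_simplify; lra.
Qed.

Lemma sK_pos : 0 < sqrt (KK m a rho - 1).
Proof. apply sqrt_lt_R0. pose proof K_gt1; lra. Qed.

Lemma bs_pos : 0 < b_rho a rho /\ 0 < b_phi a rho.
Proof.
  destruct F as (h1 & h2 & h3 & h4). unfold b_rho, b_phi.
  split; apply Rdiv_lt_0_compat; auto.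
Qed.

Lemma sumsq : b_rho a rho ^ 2 + b_phi a rho ^ 2 = 1.
Proof.
  destruct F as (h1 & h2 & h3 & h4). unfold b_rho, b_phi.
  field_simplify; [|lra]. replace (rr a rho ^ 2) with (rho ^ 2 - a ^ 2) by nra.
  field. lra.
Qed.

Lemma den_plus_neg : den_plus m a rho < 0.
Proof.
  pose proof K_gt1. pose proof sK_pos. destruct bs_pos.
  unfold den_plus.
  assert (0 < KK m a rho * b_rho a rho * sqrt (KK m a rho - 1)).
  { apply Rmult_lt_0_compat; auto. apply Rmult_lt_0_compat; lra. }
  assert (0 < KK m a rho * b_phi a rho) by (apply Rmult_lt_0_compat; lra).
  lra.
Qed.

Lemma Kb_eq : KK m a rho * b_rho a rho ^ 2 = 2 * m * rr a rho / (rr a rho ^ 2 + a ^ 2).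
Proof.
  destruct F as (h1 & h2 & h3 & h4). unfold KK, b_rho.
  replace (rr a rho ^ 2 + a ^ 2) with (rho ^ 2) by nra.
  field. lra.
Qed.

Lemma Kb1_iff : (rr a rho = r_plus m a \/ rr a rho = r_minus m a) <->
      KK m a rho * b_rho a rho ^ 2 = 1.
Proof.
  destruct F as (h1 & h2 & h3 & h4). rewrite Kb_eq.
  set (r := rr a rho) in *.
  assert (Hq0 : 0 <= m ^ 2 - a ^ 2) by nra.
  pose proof (sqrt_sqrt _ Hq0) as Hq. pose proof (sqrt_pos (m ^ 2 - a ^ 2)).
  set (q := sqrt (m ^ 2 - a ^ 2)) in *.
  assert (Hd : 0 < r ^ 2 + a ^ 2) by nra.
  unfold r_plus, r_minus; fold q.
  split.
  - intros [E|E]; rewrite E in Hd |- *.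
    + replace ((m + q) ^ 2 + a ^ 2) with (2 * m * (m + q)) in * by nra.
      field. nra.
    + replace ((m - q) ^ 2 + a ^ 2) with (2 * m * (m - q)) in * by nra.
      field. nra.
  - intro E. assert (E2 : 2 * m * r = r ^ 2 + a ^ 2).
    { apply (Rmult_eq_reg_r (/ (r ^ 2 + a ^ 2))). rewrite Rinv_r by lra. exact E.
      apply Rinv_neq_0_compat; lra. }
    assert ((r - m - q) * (r - m + q) = 0) by nra.
    destruct (Rmult_integral _ _ H0); [left|right]; lra.
Qed.

Lemma drho_minus_neg : drho_minus m a rho < 0.
Proof.
  pose proof K_gt1. pose proof sK_pos. destruct bs_pos.
  unfold drho_minus.
  assert (0 < KK m a rho * b_rho a rho * sqrt (KK m a rho - 1)).
  { apply Rmult_lt_0_compat; auto. apply Rmult_lt_0_compat; lra. }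
  assert (0 < KK m a rho * b_phi a rho) by (apply Rmult_lt_0_compat; lra).
  set (P := KK m a rho * b_rho a rho * sqrt (KK m a rho - 1) + KK m a rho * b_phi a rho).
  assert (0 < P) by (unfold P; lra).
  assert (0 < KK m a rho ^ 2) by nra.
  assert (0 < sqrt (KK m a rho - 1) * P) by nra.
  unfold Rdiv. rewrite Ropp_mult_distr_l_reverse.
  assert (0 < / KK m a rho ^ 2) by (apply Rinv_0_lt_compat; lra).
  nra.
Qed.

Lemma raw_eq : den_minus m a rho <> 0 -> drho_minus_raw m a rho = drho_minus m a rho.
Proof.
  intro HD.
  pose proof K_gt1. pose proof sK_pos. destruct bs_pos. pose proof sumsq.
  assert (Hs : sqrt (KK m a rho - 1) * sqrt (KK m a rho - 1) = KK m a rho - 1)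
    by (apply sqrt_sqrt; lra).
  unfold drho_minus_raw, drho_minus. unfold den_minus in *.
  set (K := KK m a rho) in *. set (b := b_rho a rho) in *. set (c := b_phi a rho) in *.
  set (s := sqrt (K - 1)) in *.
  assert (Hb : c * c = 1 - b * b) by nra.
  assert (Id : (K * b * s - K * c) * (K * b * s + K * c) = K ^ 2 * (K * b ^ 2 - 1)).
  { transitivity (K ^ 2 * (b ^ 2 * (s * s) - c * c)). ring. rewrite Hs, Hb. ring. }
  assert (HK : K ^ 2 <> 0) by nra.
  replace (K * b ^ 2 - 1) with ((K * b * s - K * c) * (K * b * s + K * c) / K ^ 2)
    by (rewrite Id; field; lra).
  field. split; lra.
Qed.

End S.

Theorem theorem3p1 (m a : R) (Ha : 0 < a) (Ham : a < m) :
  (* preliminaries on the region *)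
  (forall rho, in_region m a rho ->
     b_rho a rho ^ 2 + b_phi a rho ^ 2 = 1 /\ 1 < KK m a rho) /\
  (* (i) the (+) family *)
  (forall rho, in_region m a rho -> den_plus m a rho <> 0) /\
  (forall rho, in_region m a rho ->
     (drho_plus m a rho = 0 <->
      (rr a rho = r_plus m a \/ rr a rho = r_minus m a))) /\
  (forall rho, in_region m a rho ->
     ((rr a rho = r_plus m a \/ rr a rho = r_minus m a) <->
      KK m a rho * b_rho a rho ^ 2 = 1)) /\
  (exists rho1 rho2, in_region m a rho1 /\ in_region m a rho2 /\ rho1 <> rho2 /\
     rr a rho1 = r_minus m a /\ rr a rho2 = r_plus m a) /\
  (forall rho0, in_region m a rho0 ->
     (rr a rho0 = r_plus m a \/ rr a rho0 = r_minus m a) ->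
     forall t0 t1, radial_solution m a (drho_plus m a) t0 t1 (fun _ => rho0)) /\
  (* (ii) the (-) family *)
  (forall rho, in_region m a rho -> den_minus m a rho <> 0 ->
     drho_minus_raw m a rho = drho_minus m a rho) /\
  (forall rho, in_region m a rho -> drho_minus m a rho < 0) /\
  (forall t0 t1 x, radial_solution m a (drho_minus m a) t0 t1 x ->
     forall s t, t0 < s -> s < t -> t < t1 -> x t < x s) /\
  (forall rho0 t0 t1, t0 < t1 ->
     ~ radial_solution m a (drho_minus m a) t0 t1 (fun _ => rho0)).
Proof.
  assert (Hm : 0 < m) by lra.
  assert (P3 : forall rho, in_region m a rho ->
     (drho_plus m a rho = 0 <->
      (rr a rho = r_plus m a \/ rr a rho = r_minus m a))).
  { intros rho Hr. rewrite (Kb1_iff m a rho Ha Ham Hr).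
    pose proof (den_plus_neg m a rho Ha Ham Hr). pose proof (sK_pos m a rho Ha Ham Hr).
    unfold drho_plus. split.
    - intro E. unfold Rdiv in E. apply Rmult_integral in E. destruct E as [E|E].
      + apply Rmult_integral in E. destruct E; lra.
      + exfalso. apply (Rinv_neq_0_compat (den_plus m a rho)); lra.
    - intro E. rewrite E. unfold Rdiv. ring. }
  split; [intros rho Hr; split; [apply (sumsq m a rho Ha Ham Hr) | apply (K_gt1 m a rho Ha Ham Hr)]|].
  split; [intros rho Hr; pose proof (den_plus_neg m a rho Ha Ham Hr); lra|].
  split; [exact P3|].
  split; [intros rho Hr; apply (Kb1_iff m a rho Ha Ham Hr)|].
  split.
  { assert (Hq0 : 0 <= m ^ 2 - a ^ 2) by nra.
    pose proof (sqrt_sqrt _ Hq0) as Hq. pose proof (sqrt_pos (m ^ 2 - a ^ 2)).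
    assert (Hqlt : sqrt (m ^ 2 - a ^ 2) < m).
    { apply Rsqr_incrst_0; try lra. unfold Rsqr. nra. }
    assert (Hqpos : 0 < sqrt (m ^ 2 - a ^ 2)) by (apply sqrt_lt_R0; nra).
    unfold r_minus, r_plus. set (q := sqrt (m ^ 2 - a ^ 2)) in *.
    assert (HX : 0 <= 4 * m ^ 2 + a ^ 2) by nra.
    pose proof (sqrt_sqrt _ HX) as HS. pose proof (sqrt_pos (4 * m ^ 2 + a ^ 2)).
    assert (key : forall r, 0 < r -> r < 2 * m ->
       in_region m a (sqrt (r ^ 2 + a ^ 2)) /\ rr a (sqrt (r ^ 2 + a ^ 2)) = r).
    { intros r H1 H2.
      assert (Hr0 : 0 <= r ^ 2 + a ^ 2) by nra.
      pose proof (sqrt_sqrt _ Hr0) as E. pose proof (sqrt_pos (r ^ 2 + a ^ 2)).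
      split; [split|].
      - apply Rsqr_incrst_0; try lra. unfold Rsqr. nra.
      - apply Rsqr_incrst_0; try lra. unfold Rsqr. nra.
      - unfold rr. replace (sqrt (r ^ 2 + a ^ 2) ^ 2 - a ^ 2) with (r * r) by nra.
        apply sqrt_square. lra. }
    destruct (key (m - q)) as [A1 A2]; try lra.
    destruct (key (m + q)) as [B1 B2]; try lra.
    exists (sqrt ((m - q) ^ 2 + a ^ 2)), (sqrt ((m + q) ^ 2 + a ^ 2)).
    split; [exact A1|]. split; [exact B1|]. split; [|split; assumption].
    intro E. rewrite E in A2. lra. }
  split.
  { intros rho0 Hr Hc t0 t1 t Ht. split; [exact Hr|].
    replace (drho_plus m a rho0) with 0 by (symmetry; apply (P3 rho0 Hr); exact Hc).
    apply (derivable_pt_lim_const rho0 t). }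
  split; [intros rho Hr HD; apply (raw_eq m a rho Ha Ham Hr HD)|].
  assert (Neg : forall rho, in_region m a rho -> drho_minus m a rho < 0)
    by (intros rho Hr; apply (drho_minus_neg m a rho Ha Ham Hr)).
  split; [exact Neg|].
  split.
  { intros t0 t1 x Hx s t H1 H2 H3.
    pose proof (MVT_gen x s t (fun u => drho_minus m a (x u))) as M.
    cbv zeta in M. rewrite (Rmin_left s t), (Rmax_right s t) in M by lra.
    destruct M as [c [Hc E]].
    - intros u Hu. apply is_derive_Reals. apply Hx. lra.
    - intros u Hu. apply derivable_continuous_pt.
      exists (drho_minus m a (x u)). apply Hx. lra.
    - assert (drho_minus m a (x c) < 0) by (apply Neg; apply Hx; lra).
      assert (drho_minus m a (x c) * (t - s) < 0) by nra.
      lra. }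
  { intros rho0 t0 t1 Ht Hx.
    destruct (Hx ((t0 + t1) / 2)) as [Hr D]; [lra|].
    pose proof (derivable_pt_lim_const rho0 ((t0 + t1) / 2)) as D0.
    pose proof (uniqueness_limite _ _ _ _ D D0).
    pose proof (Neg rho0 Hr). lra. }
Qed.
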